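(* Let $0.5<\bar P\le1$, $\epsilon>0$, $\omega\ge0$, $\gamma_0\ge\gamma\ge0$. Let $\omega(t),\epsilon_x(t),\epsilon_y(t),\delta\gamma_t$ be real-valued functions of time with $|\omega(t)|\le\omega$, $\sqrt{\epsilon_x^2(t)+\epsilon_y^2(t)}\le\epsilon$, $|\delta\gamma_t|\le\gamma$, and set $H(t)=[1+\omega(t)]I_z+\epsilon_x(t)I_x+\epsilon_y(t)I_y$, $\gamma_t=\gamma_0+\delta\gamma_t$. Let the qubit density matrix $\rho_t$ evolve according to $$\dot\rho_t=-i[H(t),\rho_t]+\gamma_t(\sigma_x\rho_t\sigma_x-\rho_t)+\gamma_t(\sigma_y\rho_t\sigma_y-\rho_t)+\gamma_t(\sigma_z\rho_t\sigma_z-\rho_t)$$ from an initial state with $\mathrm{tr}(\rho_0^2)=1$. Let $T_d=-\frac{\ln(2\bar P-1)}{8(\gamma_0+\gamma)}$. Then for every $t\in[0,T_d]$, $\rho_t\in\mathcal{D}_d=\{\rho:\mathrm{tr}(\rho^2)\ge\bar P\}$. Consequently, if projective measurements of $\sigma_z$ are performed periodically with period $T_d$, the state remains in $\mathcal{D}_d$.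
   Context: $\sigma_x,\sigma_y,\sigma_z$ are the Pauli matrices $\begin{pmatrix}0&1\\1&0\end{pmatrix},\begin{pmatrix}0&-i\\i&0\end{pmatrix},\begin{pmatrix}1&0\\0&-1\end{pmatrix}$, $I_j=\frac12\sigma_j$, $[A,B]=AB-BA$, units with $\hbar=1$. The purity of $\rho$ is $\mathrm{tr}(\rho^2)$. *)

(* Defs.v *)
From HB Require Import structures.
From mathcomp Require Import all_boot all_order all_algebra.
From mathcomp Require Import complex.
From mathcomp Require Import all_classical all_reals all_analysis.
Set Implicit Arguments. Unset Strict Implicit. Unset Printing Implicit Defensive.
Import Order.TTheory GRing.Theory Num.Theory.
Import numFieldNormedType.Exports.
Local Open Scope ring_scope.
Local Open Scope classical_set_scope.

Section Qubit.
Variable R : realType.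
Local Notation C := R[i].

(* Pauli matrices, basis order (|0>,|1>) = (ord0, ord_max) *)
Definition sigma_x : 'M[C]_2 :=
  \matrix_(i < 2, j < 2) (if i == j then 0 else 1).
Definition sigma_y : 'M[C]_2 :=
  \matrix_(i < 2, j < 2)
    (if i == j then 0 else if (i : nat) == 0%N then - 'i%C else 'i%C).
Definition sigma_z : 'M[C]_2 :=
  \matrix_(i < 2, j < 2)
    (if i == j then (if (i : nat) == 0%N then 1 else -1) else 0).

Definition I_x : 'M[C]_2 := (2 : C)^-1 *: sigma_x.
Definition I_y : 'M[C]_2 := (2 : C)^-1 *: sigma_y.
Definition I_z : 'M[C]_2 := (2 : C)^-1 *: sigma_z.

Definition commutator (A B : 'M[C]_2) : 'M[C]_2 := A *m B - B *m A.

Definition adjoint (A : 'M[C]_2) : 'M[C]_2 := \matrix_(i, j) ((A j i)^*)%C.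

Definition density_matrix (rho : 'M[C]_2) : Prop :=
  [/\ adjoint rho = rho,
      (forall v : 'cV[C]_2, 0 <= ((\matrix_(i, j) ((v j i)^*)%C) *m rho *m v) 0 0)
    & \tr rho = 1].

Definition purity (rho : 'M[C]_2) : C := \tr (rho *m rho).

Definition hamiltonian (w ex ey : R) : 'M[C]_2 :=
  ((1 + w)%:C)%C *: I_z + (ex%:C)%C *: I_x + (ey%:C)%C *: I_y.

Definition lindblad_rhs (w ex ey g : R) (rho : 'M[C]_2) : 'M[C]_2 :=
  - ('i%C) *: commutator (hamiltonian w ex ey) rho
  + (g%:C)%C *: (sigma_x *m rho *m sigma_x - rho)
  + (g%:C)%C *: (sigma_y *m rho *m sigma_y - rho)
  + (g%:C)%C *: (sigma_z *m rho *m sigma_z - rho).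

Definition solves_master (w ex ey g : R -> R) (rho : R -> 'M[C]_2) : Prop :=
  (forall i j : 'I_2,
     {within [set x : R | 0 <= x], continuous (fun s => complex.Re (rho s i j))} /\
     {within [set x : R | 0 <= x], continuous (fun s => complex.Im (rho s i j))}) /\
  (forall t : R, 0 < t -> forall i j : 'I_2,
     is_derive t 1 (fun s => complex.Re (rho s i j))
       (complex.Re (lindblad_rhs (w t) (ex t) (ey t) (g t) (rho t) i j)) /\
     is_derive t 1 (fun s => complex.Im (rho s i j))
       (complex.Im (lindblad_rhs (w t) (ex t) (ey t) (g t) (rho t) i j))).

End Qubit.

(* Main.v *)
Require Import Defs.
From HB Require Import structures.
From mathcomp Require Import all_boot all_order all_algebra.
From mathcomp Require Import complex.
From mathcomp Require Import all_classical all_reals all_analysis.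
From mathcomp Require Import ring lra.
Import Order.TTheory GRing.Theory Num.Theory.
Import numFieldNormedType.Exports.
Local Open Scope ring_scope.

Section S.
Variable R : realType.
Local Notation C := R[i].
Definition i0 : 'I_2 := ord0.
Definition i1 : 'I_2 := ord_max.

Lemma ord2 (k : 'I_2) : k = i0 \/ k = i1.
Proof. case: k => [[|[|n]] H]; [left|right|]; try exact: val_inj. by []. Qed.

Lemma mul2E (A B : 'M[C]_2) i j : (A *m B) i j = A i i0 * B i0 j + A i i1 * B i1 j.
Proof.
rewrite mxE !big_ord_recl big_ord0 addr0.
have -> : lift ord0 ord0 = i1 :> 'I_2 by exact: val_inj.
by [].
Qed.

Lemma sx00 : sigma_x R i0 i0 = 0 :> C. Proof. by rewrite mxE. Qed.
Lemma sx01 : sigma_x R i0 i1 = 1 :> C. Proof. by rewrite mxE. Qed.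
Lemma sx10 : sigma_x R i1 i0 = 1 :> C. Proof. by rewrite mxE. Qed.
Lemma sx11 : sigma_x R i1 i1 = 0 :> C. Proof. by rewrite mxE. Qed.
Lemma sy00 : sigma_y R i0 i0 = 0 :> C. Proof. by rewrite mxE. Qed.
Lemma sy01 : sigma_y R i0 i1 = - 'i%C :> C. Proof. by rewrite mxE. Qed.
Lemma sy10 : sigma_y R i1 i0 = 'i%C :> C. Proof. by rewrite mxE. Qed.
Lemma sy11 : sigma_y R i1 i1 = 0 :> C. Proof. by rewrite mxE. Qed.
Lemma sz00 : sigma_z R i0 i0 = 1 :> C. Proof. by rewrite mxE. Qed.
Lemma sz01 : sigma_z R i0 i1 = 0 :> C. Proof. by rewrite mxE. Qed.
Lemma sz10 : sigma_z R i1 i0 = 0 :> C. Proof. by rewrite mxE. Qed.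
Lemma sz11 : sigma_z R i1 i1 = -1 :> C. Proof. by rewrite mxE. Qed.

Lemma addE (A B : 'M[C]_2) i j : (A + B) i j = A i j + B i j. Proof. by rewrite mxE. Qed.
Lemma subE (A B : 'M[C]_2) i j : (A - B) i j = A i j - B i j. Proof. by rewrite !mxE. Qed.
Lemma sclE (k : C) (A : 'M[C]_2) i j : (k *: A) i j = k * A i j. Proof. by rewrite mxE. Qed.


Section H.
Variables (w ex ey g : R) (r : 'M[C]_2).
Let H := hamiltonian w ex ey.
Let hE := (addE, sclE, sx00, sx01, sx10, sx11, sy00, sy01, sy10, sy11, sz00, sz01, sz10, sz11).
Lemma h00 : H i0 i0 = 2^-1 * ((1 + w)%:C)%C.
Proof. rewrite /H /hamiltonian /I_x /I_y /I_z !hE. ring. Qed.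
Lemma h11 : H i1 i1 = - (2^-1 * ((1 + w)%:C)%C).
Proof. rewrite /H /hamiltonian /I_x /I_y /I_z !hE. ring. Qed.
Lemma h01 : H i0 i1 = 2^-1 * ((ex%:C)%C - 'i%C * (ey%:C)%C).
Proof. rewrite /H /hamiltonian /I_x /I_y /I_z !hE. ring. Qed.
Lemma h10 : H i1 i0 = 2^-1 * ((ex%:C)%C + 'i%C * (ey%:C)%C).
Proof. rewrite /H /hamiltonian /I_x /I_y /I_z !hE. ring. Qed.

Let a := r i0 i0. Let b := r i0 i1. Let c := r i1 i0. Let d := r i1 i1.
Let p := 2^-1 * ((1 + w)%:C)%C.
Let q := 2^-1 * ((ex%:C)%C - 'i%C * (ey%:C)%C).
Let q' := 2^-1 * ((ex%:C)%C + 'i%C * (ey%:C)%C).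
Let G := (g%:C)%C.
Let L := lindblad_rhs w ex ey g r.


Lemma Lentry i j : L i j = - 'i%C * commutator H r i j
   + G * (sigma_x R *m r *m sigma_x R - r) i j
   + G * (sigma_y R *m r *m sigma_y R - r) i j
   + G * (sigma_z R *m r *m sigma_z R - r) i j.
Proof.
rewrite /L /lindblad_rhs -/H.
set X := commutator _ _. set Y1 := (sigma_x R *m r *m sigma_x R - r).
set Y2 := (sigma_y R *m r *m sigma_y R - r). set Y3 := (sigma_z R *m r *m sigma_z R - r).
rewrite [in X in X = _]addE [in X in X = _]addE [in X in X = _]addE ![in X in X = _]sclE. by [].
Qed.
Lemma comm_e i j : commutator H r i j = H i i0 * r i0 j + H i i1 * r i1 j - (r i i0 * H i0 j + r i i1 * H i1 j).
Proof. by rewrite /commutator subE !mul2E. Qed.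
Lemma dis_e (S : 'M[C]_2) i j : (S *m r *m S - r) i j =
  (S i i0 * r i0 i0 + S i i1 * r i1 i0) * S i0 j + (S i i0 * r i0 i1 + S i i1 * r i1 i1) * S i1 j - r i j.
Proof. by rewrite subE !mul2E. Qed.

Lemma entry_id :
  2 * (a - d) * (L i0 i0 - L i1 i1) + 4 * (L i0 i1 * c + b * L i1 i0)
  = - 8 * G * ((a - d) ^+ 2 + 4 * b * c).
Proof.
rewrite !Lentry !comm_e !dis_e.
rewrite h00 h01 h10 h11 sx00 sx01 sx10 sx11 sy00 sy01 sy10 sy11 sz00 sz01 sz10 sz11 -/a -/b -/c -/d.
rewrite -/G. have Hi := sqr_i R.
ring: Hi.
Qed.

Lemma trace_id : L i0 i0 + L i1 i1 = 0.
Proof.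
rewrite !Lentry !comm_e !dis_e.
rewrite h00 h01 h10 h11 sx00 sx01 sx10 sx11 sy00 sy01 sy10 sy11 sz00 sz01 sz10 sz11 -/a -/b -/c -/d.
rewrite -/G. have Hi := sqr_i R.
ring: Hi.
Qed.
End H.

Lemma pur_e (r : 'M[C]_2) : purity r = r i0 i0 * r i0 i0 + r i0 i1 * r i1 i0 + (r i1 i0 * r i0 i1 + r i1 i1 * r i1 i1).
Proof.
rewrite /purity /mxtrace !big_ord_recl big_ord0 addr0 !mul2E.
have -> : lift ord0 ord0 = i1 :> 'I_2 by exact: val_inj.
by [].
Qed.

Lemma tr_e (r : 'M[C]_2) : \tr r = r i0 i0 + r i1 i1.
Proof.
rewrite /mxtrace !big_ord_recl big_ord0 addr0.
have -> : lift ord0 ord0 = i1 :> 'I_2 by exact: val_inj.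
by [].
Qed.

Local Open Scope classical_set_scope.
Definition cder (f : R -> C) (t : R) (z : C) :=
  is_derive t (1:R) (fun s => complex.Re (f s)) (complex.Re z) /\ is_derive t (1:R) (fun s => complex.Im (f s)) (complex.Im z).

Lemma cderD f g t z1 z2 : cder f t z1 -> cder g t z2 -> cder (fun s => f s + g s) t (z1 + z2).
Proof.
move=> [h1 h2] [h3 h4]; split.
- have -> : (fun s => complex.Re (f s + g s)) = (fun s => complex.Re (f s) + complex.Re (g s)).
    by apply/funext => s /=; case: (f s) => ? ?; case: (g s).
  apply: is_derive_eq (is_deriveD h1 h3) _.
  by case: z1 {h1 h2} => ? ?; case: z2 {h3 h4}.
- have -> : (fun s => complex.Im (f s + g s)) = (fun s => complex.Im (f s) + complex.Im (g s)).
    by apply/funext => s /=; case: (f s) => ? ?; case: (g s).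
  apply: is_derive_eq (is_deriveD h2 h4) _.
  by case: z1 {h1 h2} => ? ?; case: z2 {h3 h4}.
Qed.

Lemma cderN f t z : cder f t z -> cder (fun s => - f s) t (- z).
Proof.
move=> [h1 h2]; split.
- have -> : (fun s => complex.Re (- f s)) = (fun s => - complex.Re (f s)).
    by apply/funext => s /=; case: (f s).
  apply: is_derive_eq (is_deriveN h1) _.
  by case: z {h1 h2}.
- have -> : (fun s => complex.Im (- f s)) = (fun s => - complex.Im (f s)).
    by apply/funext => s /=; case: (f s).
  apply: is_derive_eq (is_deriveN h2) _.
  by case: z {h1 h2}.
Qed.

Lemma cderC (k : C) t : cder (fun _ => k) t 0.
Proof. split; exact: is_derive_cst. Qed.

Lemma cderM f g t z1 z2 : cder f t z1 -> cder g t z2 ->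
  cder (fun s => f s * g s) t (f t * z2 + z1 * g t).
Proof.
move=> [h1 h2] [h3 h4]; split.
- have -> : (fun s => complex.Re (f s * g s)) = (fun s => complex.Re (f s) * complex.Re (g s) - complex.Im (f s) * complex.Im (g s)).
    by apply/funext => s /=; case: (f s) => ? ?; case: (g s).
  apply: is_derive_eq (is_deriveB (is_deriveM h1 h3) (is_deriveM h2 h4)) _.
  rewrite /= /GRing.scale /=.
  by case: (f t) => ? ?; case: (g t) => ? ?; case: z1 {h1 h2} => ? ?; case: z2 {h3 h4} => ? ? /=; ring.
- have -> : (fun s => complex.Im (f s * g s)) = (fun s => complex.Re (f s) * complex.Im (g s) + complex.Im (f s) * complex.Re (g s)).
    by apply/funext => s /=; case: (f s) => ? ?; case: (g s).
  apply: is_derive_eq (is_deriveD (is_deriveM h1 h4) (is_deriveM h2 h3)) _.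
  rewrite /= /GRing.scale /=.
  by case: (f t) => ? ?; case: (g t) => ? ?; case: z1 {h1 h2} => ? ?; case: z2 {h3 h4} => ? ? /=; ring.
Qed.

Definition A0 := [set x : R | 0 <= x]%classic.
Definition ccont (f : R -> C) :=
  {within A0, continuous (fun s => complex.Re (f s))} /\ {within A0, continuous (fun s => complex.Im (f s))}.

Lemma ccontD f g : ccont f -> ccont g -> ccont (fun s => f s + g s).
Proof.
move=> [h1 h2] [h3 h4]; split.
- have -> : (fun s => complex.Re (f s + g s)) = (fun s => complex.Re (f s) + complex.Re (g s)).
    by apply/funext => s /=; case: (f s) => ? ?; case: (g s).
  by move=> x; exact: (continuousD (h1 x) (h3 x)).
- have -> : (fun s => complex.Im (f s + g s)) = (fun s => complex.Im (f s) + complex.Im (g s)).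
    by apply/funext => s /=; case: (f s) => ? ?; case: (g s).
  by move=> x; exact: (continuousD (h2 x) (h4 x)).
Qed.

Lemma ccontN f : ccont f -> ccont (fun s => - f s).
Proof.
move=> [h1 h2]; split.
- have -> : (fun s => complex.Re (- f s)) = (fun s => - complex.Re (f s)).
    by apply/funext => s /=; case: (f s).
  by move=> x; exact: (continuousN (h1 x)).
- have -> : (fun s => complex.Im (- f s)) = (fun s => - complex.Im (f s)).
    by apply/funext => s /=; case: (f s).
  by move=> x; exact: (continuousN (h2 x)).
Qed.

Lemma ccontC (k : C) : ccont (fun _ => k).
Proof. by split => x; apply: cst_continuous. Qed.

Lemma ccontM f g : ccont f -> ccont g -> ccont (fun s => f s * g s).
Proof.
move=> [h1 h2] [h3 h4]; split.
- have -> : (fun s => complex.Re (f s * g s)) = (fun s => complex.Re (f s) * complex.Re (g s) - complex.Im (f s) * complex.Im (g s)).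
    by apply/funext => s /=; case: (f s) => ? ?; case: (g s).
  by move=> x; exact: (continuousB (continuousM (h1 x) (h3 x)) (continuousM (h2 x) (h4 x))).
- have -> : (fun s => complex.Im (f s * g s)) = (fun s => complex.Re (f s) * complex.Im (g s) + complex.Im (f s) * complex.Re (g s)).
    by apply/funext => s /=; case: (f s) => ? ?; case: (g s).
  by move=> x; exact: (continuousD (continuousM (h1 x) (h4 x)) (continuousM (h2 x) (h3 x))).
Qed.

Lemma mono_up (f df : R -> R) (t : R) : 0 <= t -> {within A0, continuous f} ->
  (forall s : R, 0 < s -> is_derive s 1 f (df s)) -> (forall s : R, 0 < s -> 0 <= df s) -> f 0 <= f t.
Proof.
move=> t0 cf hd hp.
apply: (@ger0_derive1_ndecr R f 0 t) => //.
- move=> x; rewrite in_itv /= => /andP[x0 _]; exact: (@ex_derive _ _ _ _ _ _ _ (hd x x0)).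
- move=> x; rewrite in_itv /= => /andP[x0 _].
  by have hx := hd x x0; rewrite derive1E derive_val; exact: hp.
- apply: continuous_subspaceW cf => x /=; rewrite in_itv /= => /andP[].
  by [].
Qed.

Lemma const_fun (V : R -> R) (t : R) : 0 <= t -> {within A0, continuous V} ->
  (forall s : R, 0 < s -> is_derive s 1 V 0) -> V t = V 0.
Proof.
move=> t0 cV hd; apply/eqP; rewrite eq_le; apply/andP; split.
- have := @mono_up (fun s => - V s) (fun _ => 0) t t0.
  rewrite lerN2; apply => //.
  + by move=> x; exact: (continuousN (cV x)).
  + move=> s s0; apply: is_derive_eq (is_deriveN (hd s s0)) _; exact: oppr0.
- apply: (@mono_up V (fun _ => 0)) => //.
Qed.

Lemma decay0 (Y g : R -> R) (t : R) : 0 <= t -> {within A0, continuous Y} ->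
  (forall s : R, 0 < s -> is_derive s 1 Y (-8 * g s * Y s)) ->
  (forall s : R, 0 < s -> 0 <= g s) -> Y 0 = 0 -> Y t = 0.
Proof.
move=> t0 cY hd hg Y0.
have := @mono_up (fun s => - (Y s * Y s)) (fun s => 16 * g s * (Y s * Y s)) t t0.
rewrite Y0 mulr0 oppr0 oppr_ge0 => H.
have : Y t * Y t <= 0.
  apply: H.
  + by move=> x; exact: (continuousN (continuousM (cY x) (cY x))).
  + move=> s s0; apply: is_derive_eq (is_deriveN (is_deriveM (hd s s0) (hd s s0))) _.
    rewrite /GRing.scale /=; ring.
  + move=> s s0; apply: mulr_ge0; [apply: mulr_ge0 => //; exact: hg|exact: sqr_ge0].
by move=> h; apply/eqP; rewrite -sqrf_eq0 eq_le h sqr_ge0.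
Qed.

Lemma growth (X g : R -> R) (c t : R) : 0 <= t -> {within A0, continuous X} ->
  (forall s : R, 0 < s -> is_derive s 1 X (-8 * g s * X s)) ->
  (forall s : R, 0 < s -> g s <= c) -> X 0 = 1 -> expR (-8 * c * t) <= X t.
Proof.
move=> t0 cX hd hg X0.
pose E s := expR (16 * c * s).
have dE (s : R) : is_derive s 1 E (16 * c * E s).
  have H1 : is_derive s 1 (fun s => 16 * c * s) (16 * c).
    apply: is_derive_eq (is_deriveZ (16 * c) (is_derive_id s 1)) _.
    by rewrite /GRing.scale /= mulr1.
  apply: is_derive_eq (is_derive1_comp (is_derive_expR _) H1) _.
  by rewrite mulrC.
have cE : {within A0, continuous E}.
  apply: continuous_subspaceT => x; apply: differentiable_continuous.
  apply/derivable1_diffP; exact: (@ex_derive _ _ _ _ _ _ _ (dE x)).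
have Zge (s : R) : 0 <= s -> 1 <= X s * X s * E s.
  move=> s0.
  have := @mono_up (fun s => X s * X s * E s)
    (fun s => 16 * (X s * X s) * E s * (c - g s)) s s0.
  rewrite X0 /E mulr0 expR0 !mulr1; apply.
  + by move=> x; exact: (continuousM (continuousM (cX x) (cX x)) (cE x)).
  + move=> u u0; apply: is_derive_eq (is_deriveM (is_deriveM (hd u u0) (hd u u0)) (dE u)) _.
    rewrite /GRing.scale /= /E; have -> : (X * X) u = X u * X u by []; ring.
  + move=> u u0; apply: mulr_ge0; last by rewrite subr_ge0; exact: hg.
    apply: mulr_ge0; last exact: expR_ge0.
    apply: mulr_ge0 => //; exact: sqr_ge0.
have Xt : 0 < X t.
  rewrite ltNge; apply/negP => Xle.
  have hc : {within `[0, t], continuous X}.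
    by apply: continuous_subspaceW cX => x /=; rewrite in_itv /= => /andP[] //.
  have hm : Num.min (X 0) (X t) <= 0 <= Num.max (X 0) (X t).
    rewrite X0; apply/andP; split; [rewrite ge_min Xle orbT // | rewrite le_max ler01 //].
  have [c0 c0in Xc0] := @IVT R X 0 t 0 t0 hc hm.
  move: c0in; rewrite in_itv /= => /andP[c00 _].
  by have := Zge c0 c00; rewrite Xc0 !mul0r ler10.
have := Zge t t0.
have Ep : 0 < E t by exact: expR_gt0.
have mE : expR (-8 * c * t) * expR (-8 * c * t) * E t = 1.
  by rewrite /E -!expRD -expR0; congr expR; ring.
set m := expR (-8 * c * t).
have mp : 0 < m by exact: expR_gt0.
rewrite -mE ler_pM2r // => H.
rewrite leNgt; apply/negP => lt. have := ltr_pM (ltW Xt) (ltW Xt) lt lt. by rewrite ltNge H.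
Qed.
End S.

Arguments cder {R}.
Arguments ccont {R}.
Arguments cderD {R f g t z1 z2}.
Arguments cderN {R f t z}.
Arguments cderC {R}.
Arguments cderM {R f g t z1 z2}.
Arguments ccontD {R f g}.
Arguments ccontN {R f}.
Arguments ccontC {R}.
Arguments ccontM {R f g}.
Arguments entry_id {R}.
Arguments trace_id {R}.
Arguments pur_e {R}.
Arguments tr_e {R}.
Arguments const_fun {R}.
Arguments decay0 {R}.
Arguments growth {R}.
Arguments A0 {R}.

Lemma ReMr (R : realType) (k : R) (z : R[i]) : complex.Re ((k%:C)%C * z) = k * complex.Re z.
Proof. case: z => x y /=; ring. Qed.
Lemma ImMr (R : realType) (k : R) (z : R[i]) : complex.Im ((k%:C)%C * z) = k * complex.Im z.
Proof. case: z => x y /=; ring. Qed.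

Theorem theorem5 (R : realType) (Pbar eps omega gamma0 gamma : R)
  (w ex ey dg : R -> R) (rho : R -> 'M[R[i]]_2) :
  1 / 2 < Pbar -> Pbar <= 1 -> 0 < eps -> 0 <= omega ->
  0 <= gamma -> gamma <= gamma0 ->
  (forall t, 0 <= t -> `|w t| <= omega) ->
  (forall t, 0 <= t -> Num.sqrt (ex t ^+ 2 + ey t ^+ 2) <= eps) ->
  (forall t, 0 <= t -> `|dg t| <= gamma) ->
  solves_master w ex ey (fun t => gamma0 + dg t) rho ->
  density_matrix (rho 0) ->
  purity (rho 0) = 1 ->
  forall t : R, 0 <= t ->
    (* t <= T_d, with T_d = - ln(2 Pbar - 1) / (8 (gamma0 + gamma)) *)
    8 * (gamma0 + gamma) * t <= - ln (2 * Pbar - 1) ->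
    ((Pbar%:C)%C <= purity (rho t)).
Proof.
move=> hP1 hP2 _ _ hg0 hgg _ _ hdg [hcont hder] [_ _ htr0] hpur0 t t0 ht.
have dE (i j : 'I_2) (s : R) : 0 < s -> cder (fun u => rho u i j) s
    (lindblad_rhs (w s) (ex s) (ey s) (gamma0 + dg s) (rho s) i j).
  by move=> s0; have [h1 h2] := hder s s0 i j; split.
have cE (i j : 'I_2) : ccont (fun u => rho u i j).
  by have [h1 h2] := hcont i j; split.
have gle (s : R) : 0 < s -> gamma0 + dg s <= gamma0 + gamma.
  by move=> s0; have := hdg s (ltW s0); rewrite ler_norml => /andP[h1 h2]; lra.
have gge (s : R) : 0 < s -> 0 <= gamma0 + dg s.
  by move=> s0; have := hdg s (ltW s0); rewrite ler_norml => /andP[h1 h2]; lra.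
have dQ (s : R) : 0 < s -> cder (fun u => (rho u i0 i0 + - rho u i1 i1) * (rho u i0 i0 + - rho u i1 i1)
      + 4 * (rho u i0 i1 * rho u i1 i0)) s
    ((((-8) * (gamma0 + dg s))%:C)%C * ((rho s i0 i0 + - rho s i1 i1) * (rho s i0 i0 + - rho s i1 i1)
      + 4 * (rho s i0 i1 * rho s i1 i0))).
  move=> s0.
  have hD := cderD (dE i0 i0 s s0) (cderN (dE i1 i1 s s0)).
  have H := cderD (cderM hD hD) (cderM (cderC 4 s) (cderM (dE i0 i1 s s0) (dE i1 i0 s s0))).
  move: H.
  have EI := entry_id (w s) (ex s) (ey s) (gamma0 + dg s) (rho s).
  set L := lindblad_rhs _ _ _ _ _ in EI *.
  move=> H.
  suff E : (((rho s i0 i0 + - rho s i1 i1) * (L i0 i0 + - L i1 i1) +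
     (L i0 i0 + - L i1 i1) * (rho s i0 i0 + - rho s i1 i1) +
     (4 * (rho s i0 i1 * L i1 i0 + L i0 i1 * rho s i1 i0) + 0 * (rho s i0 i1 * rho s i1 i0)))
     = (((-8) * (gamma0 + dg s))%:C)%C * ((rho s i0 i0 + - rho s i1 i1) * (rho s i0 i0 + - rho s i1 i1)
      + 4 * (rho s i0 i1 * rho s i1 i0)))%R by rewrite -E.
  rewrite rmorphM rmorphN /= rmorph_nat.
  transitivity (2 * (rho s i0 i0 - rho s i1 i1) * (L i0 i0 - L i1 i1) + 4 * (L i0 i1 * rho s i1 i0 + rho s i0 i1 * L i1 i0)); first ring.
  rewrite EI; ring.
set Q := (fun u => (rho u i0 i0 + - rho u i1 i1) * (rho u i0 i0 + - rho u i1 i1)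
      + 4 * (rho u i0 i1 * rho u i1 i0)) in dQ.
have cQ : ccont Q.
  have hD := ccontD (cE i0 i0) (ccontN (cE i1 i1)).
  exact: (ccontD (ccontM hD hD) (ccontM (ccontC 4) (ccontM (cE i0 i1) (cE i1 i0)))).
have dU (s : R) : 0 < s -> cder (fun u => rho u i0 i0 + rho u i1 i1) s 0.
  move=> s0; have H := cderD (dE i0 i0 s s0) (dE i1 i1 s s0).
  by rewrite -(trace_id (w s) (ex s) (ey s) (gamma0 + dg s) (rho s)).
have cU : ccont (fun u => rho u i0 i0 + rho u i1 i1) by exact: ccontD (cE i0 i0) (cE i1 i1).
have U0 : rho 0 i0 i0 + rho 0 i1 i1 = 1 by rewrite -tr_e.
have Q0 : Q 0 = 1.
  have -> : Q 0 = 2 * purity (rho 0) - (\tr (rho 0)) ^+ 2 by rewrite pur_e tr_e /Q; ring.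
  by rewrite hpur0 htr0; ring.
have ReU : complex.Re (rho t i0 i0 + rho t i1 i1) = 1.
  have := const_fun (fun u => complex.Re (rho u i0 i0 + rho u i1 i1)) t t0 cU.1 (fun s s0 => (dU s s0).1).
  by move=> /= ->; rewrite U0.
have ImU : complex.Im (rho t i0 i0 + rho t i1 i1) = 0.
  have := const_fun (fun u => complex.Im (rho u i0 i0 + rho u i1 i1)) t t0 cU.2 (fun s s0 => (dU s s0).2).
  by move=> /= ->; rewrite U0.
have ImQ : complex.Im (Q t) = 0.
  apply: (decay0 (fun u => complex.Im (Q u)) (fun u => gamma0 + dg u) t t0 cQ.2) => //.
  - by move=> s s0; rewrite -ImMr; exact: (dQ s s0).2.
  - by rewrite Q0.
have ReQ : expR (-8 * (gamma0 + gamma) * t) <= complex.Re (Q t).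
  apply: (growth (fun u => complex.Re (Q u)) (fun u => gamma0 + dg u) (gamma0 + gamma) t t0 cQ.1) => //.
  - by move=> s s0; rewrite -ReMr; exact: (dQ s s0).1.
  - by rewrite Q0.
have h2 : purity (rho t) + purity (rho t) = (rho t i0 i0 + rho t i1 i1) * (rho t i0 i0 + rho t i1 i1) + Q t.
  by rewrite pur_e /Q; ring.
have eb : 2 * Pbar - 1 <= expR (-8 * (gamma0 + gamma) * t).
  have h : ln (2 * Pbar - 1) <= -8 * (gamma0 + gamma) * t by lra.
  rewrite -[X in X <= _]lnK ?ler_expR //; rewrite posrE; lra.
move: h2 ReU ImU ReQ ImQ eb.
case: (purity (rho t)) => x y; case: (rho t i0 i0 + rho t i1 i1) => u v; case: (Q t) => q r /=.
move=> h2 hu hv qge hr eb; subst u v r.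
move: h2 => [hx hy].
rewrite lecE /=; apply/andP; split.
- by apply/eqP; lra.
- lra.
Qed.
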